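(* (Quantitative subject reduction.) If $\Gamma\vdash^{n_1} t_1:\sigma$ is derivable in $\cap J$ and $t_1\to_{d\beta}t_2$ is a non-erasing step, then $\Gamma\vdash^{n_2}t_2:\sigma$ is derivable in $\cap J$ for some $n_2<n_1$.
   Context: Terms $\mathtt T_J$: $t,u,r ::= x \mid \lambda x.t \mid t(u,y.r)$ ($y$ bound in $r$), up to $\alpha$-equivalence; $\{u/x\}t$ capture-avoiding substitution. List contexts $\mathtt D ::= \Diamond \mid t(u,y.\mathtt D)$. Distant beta: $\mathtt D\langle\lambda x.t\rangle(u,y.r) \mapsto_{d\beta} \{\{u/x\}\mathtt D\langle t\rangle/y\}r$ (variables bound by $\mathtt D$ not free in $u$, $x$ not in $\mathtt D$), $\to_{d\beta}$ its closure under all contexts. A step is non-erasing if the contracted redex $\mathtt D\langle\lambda x.t\rangle(u,y.r)$ satisfies $x\in\mathrm{fv}(t)$ and $y\in\mathrm{fv}(r)$. System $\cap J$: types $\sigma,\tau ::= \alpha \mid \mathcal M\to\sigma$, $\mathcal M=[\sigma_i]_{i\in I}$ a finite possibly empty multiset; $\sqcup$ multiset union; environments map variables to multisets, $\wedge$ pointwise union, $\Gamma;x:\mathcal M$ extension with $x\notin\mathrm{dom}\,\Gamma$. $\mathrm{ch}(\mathcal M)=\mathcal M$ if $\mathcal M\ne[\,]$, $\mathrm{ch}([\,])=[\tau]$ for an arbitrary $\tau$. Rules: (var) $x:[\sigma]\vdash x:\sigma$; (abs) from $\Gamma;x:\mathcal M\vdash t:\sigma$ infer $\Gamma\vdash\lambda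 x.t:\mathcal M\to\sigma$; (many) from $(\Gamma_i\vdash t:\sigma_i)_{i\in I}$, $I\ne\emptyset$, infer $\wedge_i\Gamma_i\vdash t:[\sigma_i]_{i\in I}$; (app) from $\Gamma\vdash t:\mathrm{ch}([\mathcal M_i\to\tau_i]_{i\in I})$, $\Delta\vdash u:\mathrm{ch}(\sqcup_i\mathcal M_i)$, $\Lambda;y:[\tau_i]_{i\in I}\vdash r:\sigma$ infer $\Gamma\wedge\Delta\wedge\Lambda\vdash t(u,y.r):\sigma$. $\vdash^n$ indicates a derivation of size $n$ = number of rule instances other than (many). *)

(* Defs.v *)
From Stdlib Require Import List Arith.
Import ListNotations.

(* App t u r  =  t(u, y.r), where y is de Bruijn index 0 in r. *)
Inductive tm : Type :=
| Var (n : nat)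
| Lam (t : tm)
| App (t u r : tm).

Fixpoint lift (d c : nat) (t : tm) : tm :=
  match t with
  | Var n => if n <? c then Var n else Var (n + d)
  | Lam t => Lam (lift d (S c) t)
  | App t u r => App (lift d c t) (lift d c u) (lift d (S c) r)
  end.

(* subst k u t = {u/k} t : capture-avoiding substitution of u for index k,
   indices above k are decremented (the binder of k disappears). *)
Fixpoint subst (k : nat) (u : tm) (t : tm) : tm :=
  match t with
  | Var n => if n <? k then Var n
             else if n =? k then lift k 0 u
             else Var (n - 1)
  | Lam t => Lam (subst (S k) u t)
  | App t1 t2 r => App (subst k u t1) (subst k u t2) (subst (S k) u r)
  end.

Fixpoint occurs (k : nat) (t : tm) : bool :=
  match t with
  | Var n => n =? k
  | Lam t => occurs (S k) t
  | App t u r => occurs k t || occurs k u || occurs (S k) r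
  end.

Inductive lctx : Type :=
| Hole
| LApp (t u : tm) (D : lctx).

Fixpoint plug (D : lctx) (s : tm) : tm :=
  match D with
  | Hole => s
  | LApp t u D => App t u (plug D s)
  end.

Fixpoint depth (D : lctx) : nat :=
  match D with
  | Hole => 0
  | LApp _ _ D => S (depth D)
  end.

(* Distant beta at the root:
   D<lam x.t>(u, y.r)  |->  {{u/x} D<t> / y} r.
   In de Bruijn form u is lifted over the depth(D) binders of D (this is
   the side condition "variables bound by D not free in u"); x is index 0
   in t and does not occur in D. *)
Definition dbeta_contractum (D : lctx) (t u r : tm) : tm :=
  subst 0 (plug D (subst 0 (lift (depth D) 0 u) t)) r.

(* Non-erasing d-beta steps, closed under all contexts: the contracted redex
   D<lam x.t>(u, y.r) satisfies x in fv(t) and y in fv(r). *)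
Inductive ne_step : tm -> tm -> Prop :=
| ne_root D t u r :
    occurs 0 t = true -> occurs 0 r = true ->
    ne_step (App (plug D (Lam t)) u r) (dbeta_contractum D t u r)
| ne_lam t t' : ne_step t t' -> ne_step (Lam t) (Lam t')
| ne_app1 t t' u r : ne_step t t' -> ne_step (App t u r) (App t' u r)
| ne_app2 t u u' r : ne_step u u' -> ne_step (App t u r) (App t u' r)
| ne_app3 t u r r' : ne_step r r' -> ne_step (App t u r) (App t u r').

(* Multisets are represented by lists, considered up to [meq] below. *)
Inductive ty : Type :=
| TAtom (a : nat)
| TArr (M : list ty) (s : ty).

Definition mset := list ty.

Inductive teq : ty -> ty -> Prop :=
| teq_atom a : teq (TAtom a) (TAtom a)
| teq_arr M M' s s' : meq M M' -> teq s s' -> teq (TArr M s) (TArr M' s')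
with meq : mset -> mset -> Prop :=
| meq_nil : meq [] []
| meq_cons s s' M M1 M2 :
    teq s s' -> meq M (M1 ++ M2) -> meq (s :: M) (M1 ++ s' :: M2).

Definition env := nat -> mset.

Definition env_eq (G G' : env) : Prop := forall x, meq (G x) (G' x).

Definition env_union (G D : env) : env := fun x => G x ++ D x.

Definition env_single (x : nat) (s : ty) : env :=
  fun y => if y =? x then [s] else [].

(* Gamma ; x : M, where x is the newly bound variable (index 0) *)
Definition env_ext (M : mset) (G : env) : env :=
  fun y => match y with 0 => M | S k => G k end.

Definition is_ch (M M' : mset) : Prop :=
  (M <> [] /\ M' = M) \/ (M = [] /\ exists tau, M' = [tau]).

(* typed G t s n : there is a derivation of G |- t : s of size n
   (number of rule instances other than (many));
   mtyped G t M n : the same for the multiset judgement built by (many). *)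
Inductive typed : env -> tm -> ty -> nat -> Prop :=
| t_var x s : typed (env_single x s) (Var x) s 1
| t_abs G M t s n :
    typed (env_ext M G) t s n -> typed G (Lam t) (TArr M s) (S n)
| t_app G D L t u r s (ps : list (mset * ty)) Mt Mu n1 n2 n3 :
    is_ch (map (fun p => TArr (fst p) (snd p)) ps) Mt ->
    is_ch (concat (map fst ps)) Mu ->
    mtyped G t Mt n1 ->
    mtyped D u Mu n2 ->
    typed (env_ext (map snd ps) L) r s n3 ->
    typed (env_union G (env_union D L)) (App t u r) s (S (n1 + n2 + n3))
(* judgements are taken modulo multiset equality in types and environments *)
| t_eq G G' t s s' n :
    typed G t s n -> env_eq G G' -> teq s s' -> typed G' t s' n
with mtyped : env -> tm -> mset -> nat -> Prop :=
| m_one G t s n : typed G t s n -> mtyped G t [s] n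
| m_cons G D t s M n m :
    typed G t s n -> mtyped D t M m -> mtyped (env_union G D) t (s :: M) (n + m).

(* Main.v *)
Require Import Defs.
From Stdlib Require Import List Arith Lia Permutation Setoid Morphisms.
Import ListNotations.

Scheme teq_mut := Induction for teq Sort Prop
with meq_mut := Induction for meq Sort Prop.

Definition meqP (M M' : mset) := exists P, Permutation M P /\ Forall2 teq P M'.

Lemma meq_to_P : forall M M', meq M M' -> meqP M M'.
Proof.
  intros M M' H. induction H as [|s s' M M1 M2 Hs HM IH].
  - exists []. split; constructor.
  - destruct IH as [P [HP HF]].
    apply Forall2_app_inv_r in HF. destruct HF as [P1 [P2 [HF1 [HF2 ->]]]].
    exists (P1 ++ s :: P2). split.
    + apply Permutation_cons_app. exact HP.
    + apply Forall2_app; [exact HF1| constructor; assumption].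
Qed.

Lemma P_to_meq_n : forall n M P M', length M = n -> Permutation M P -> Forall2 teq P M' -> meq M M'.
Proof.
  induction n; intros M P M' Hl HP HF.
  - destruct M; [|discriminate]. apply Permutation_nil in HP. subst. inversion HF. constructor.
  - destruct M as [|s M0]; [discriminate|].
    assert (Hin : In s P) by (eapply Permutation_in; [exact HP| left; reflexivity]).
    apply in_split in Hin. destruct Hin as [P1 [P2 ->]].
    apply Permutation_cons_app_inv in HP.
    apply Forall2_app_inv_l in HF. destruct HF as [M1 [M2' [HF1 [HF2 ->]]]].
    inversion HF2; subst.
    apply meq_cons; [assumption|].
    apply (IHn M0 (P1 ++ P2)); [simpl in Hl; lia | exact HP | apply Forall2_app; assumption].
Qed.

Lemma P_to_meq : forall M P M', Permutation M P -> Forall2 teq P M' -> meq M M'.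
Proof. intros; eapply P_to_meq_n; eauto. Qed.

Fixpoint teq_refl (s : ty) : teq s s :=
  match s with
  | TAtom a => teq_atom a
  | TArr M s0 => teq_arr M M s0 s0
      ((fix mr (l : list ty) : meq l l :=
          match l with
          | [] => meq_nil
          | x :: l' => meq_cons x x l' [] l' (teq_refl x) (mr l')
          end) M) (teq_refl s0)
  end.

Lemma Forall2_teq_refl : forall l, Forall2 teq l l.
Proof. induction l; constructor; auto using teq_refl. Qed.

Lemma meq_refl : forall M, meq M M.
Proof. intro M. apply (P_to_meq M M M); [apply Permutation_refl | apply Forall2_teq_refl]. Qed.

Lemma meq_perm : forall A B, Permutation A B -> meq A B.
Proof. intros. apply (P_to_meq A B B); auto using Forall2_teq_refl. Qed.

Lemma meq_length : forall A B, meq A B -> length A = length B.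
Proof. intros A B H. apply meq_to_P in H. destruct H as [P [H1 H2]].
  rewrite (Permutation_length H1). eapply Forall2_length; eauto. Qed.

Lemma teq_meq_sym : (forall s s', teq s s' -> teq s' s) /\ (forall M M', meq M M' -> meq M' M).
Proof.
  assert (H1 : forall s s', teq s s' -> teq s' s).
  { apply (teq_mut (fun s s' _ => teq s' s) (fun M M' _ => meq M' M)); intros.
    - constructor.
    - constructor; assumption.
    - constructor.
    - apply meq_to_P in H0. destruct H0 as [Q [HQ HF]].
      apply (P_to_meq _ (s' :: Q)).
      + eapply Permutation_trans; [apply Permutation_sym, Permutation_middle|]. constructor. exact HQ.
      + constructor; assumption. }
  split; [exact H1|].
  intros M M' H. apply meq_to_P in H. destruct H as [Q [HQ HF]].
  assert (HF' : Forall2 teq M' Q).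
  { clear HQ. induction HF; constructor; auto. }
  assert (forall A B C, Permutation B A -> Forall2 teq C B -> exists D, Permutation C D /\ Forall2 teq D A).
  { clear. intros A B C HP. revert C. induction HP; intros C HF.
    - inversion HF; subst. exists []; split; constructor.
    - inversion HF; subst. destruct (IHHP l0 H3) as [D [HD1 HD2]].
      exists (x0 :: D). split; constructor; auto.
    - inversion HF as [|c1 C1 b1 B1 Hc1 HF1]; subst. inversion HF1 as [|c2 C2 b2 B2 Hc2 HF2]; subst.
      exists (c2 :: c1 :: b2). split; [constructor|repeat constructor; auto].
    - destruct (IHHP1 C HF) as [D [HD1 HD2]]. destruct (IHHP2 D HD2) as [E [HE1 HE2]].
      exists E. split; [eapply Permutation_trans; eauto|auto]. }
  destruct (H M Q M' (Permutation_sym HQ) HF') as [D [HD1 HD2]].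
  eapply P_to_meq; eauto.
Qed.

Lemma teq_sym : forall s s', teq s s' -> teq s' s. Proof. apply teq_meq_sym. Qed.
Lemma meq_sym : forall M M', meq M M' -> meq M' M. Proof. apply teq_meq_sym. Qed.

Lemma meq_middle_inv : forall M1 M2 x M3, meq (M1 ++ x :: M2) M3 ->
  exists N1 N2 y, M3 = N1 ++ y :: N2 /\ teq x y /\ meq (M1 ++ M2) (N1 ++ N2).
Proof.
  intros M1 M2 x M3 H. apply meq_to_P in H. destruct H as [Q [HQ HF]].
  assert (Hin : In x Q) by (eapply Permutation_in; [exact HQ| apply in_elt]).
  apply in_split in Hin. destruct Hin as [Q1 [Q2 ->]].
  apply Permutation_app_inv in HQ.
  apply Forall2_app_inv_l in HF. destruct HF as [N1 [N2' [HF1 [HF2 ->]]]].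
  inversion HF2; subst.
  exists N1, l', y. split; [reflexivity|]. split; [assumption|].
  eapply P_to_meq; [exact HQ| apply Forall2_app; assumption].
Qed.

Lemma teq_meq_trans : (forall s1 s2, teq s1 s2 -> forall s3, teq s2 s3 -> teq s1 s3).
Proof.
  apply (teq_mut (fun s1 s2 _ => forall s3, teq s2 s3 -> teq s1 s3)
                 (fun M1 M2 _ => forall M3, meq M2 M3 -> meq M1 M3)); intros.
  - exact H.
  - inversion H1; subst. constructor; auto.
  - exact H.
  - apply meq_middle_inv in H1. destruct H1 as [N1 [N2 [y [-> [Hy HN]]]]].
    apply meq_cons; auto.
Qed.

Lemma meq_trans : forall M1 M2 M3, meq M1 M2 -> meq M2 M3 -> meq M1 M3.
Proof.
  intros M1 M2 M3 H. revert M3. revert M1 M2 H.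
  apply (meq_mut (fun s1 s2 _ => forall s3, teq s2 s3 -> teq s1 s3)
                 (fun M1 M2 _ => forall M3, meq M2 M3 -> meq M1 M3)); intros.
  - exact H.
  - inversion H1; subst. constructor; auto.
  - exact H.
  - apply meq_middle_inv in H1. destruct H1 as [N1 [N2 [y [-> [Hy HN]]]]].
    apply meq_cons; auto.
Qed.
Lemma teq_trans : forall s1 s2 s3, teq s1 s2 -> teq s2 s3 -> teq s1 s3.
Proof. intros; eapply teq_meq_trans; eauto. Qed.

Lemma meq_app : forall A A' B B', meq A A' -> meq B B' -> meq (A ++ B) (A' ++ B').
Proof.
  intros A A' B B' H1 H2. apply meq_to_P in H1. apply meq_to_P in H2.
  destruct H1 as [P [HP HF]]. destruct H2 as [Q [HQ HG]].
  apply (P_to_meq _ (P ++ Q)); [apply Permutation_app; auto | apply Forall2_app; auto].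
Qed.

#[global] Instance meq_Equiv : Equivalence meq.
Proof. split; [exact meq_refl | exact meq_sym | exact meq_trans]. Qed.
#[global] Instance app_meq_Proper : Proper (meq ==> meq ==> meq) (@app ty).
Proof. intros A A' H B B' H'. apply meq_app; auto. Qed.
#[global] Instance teq_Equiv : Equivalence teq.
Proof. split; [exact teq_refl | exact teq_sym | exact teq_trans]. Qed.


Lemma perm_mid {A} : forall (a b c : list A), Permutation (a ++ b ++ c) (b ++ a ++ c).
Proof. intros. rewrite !app_assoc. apply Permutation_app_tail, Permutation_app_comm. Qed.

Ltac front h := match goal with
 | |- Permutation (h ++ ?L) _ => apply Permutation_refl
 | |- Permutation (?x ++ h) _ => apply Permutation_app_comm
 | |- Permutation (?x ++ ?L) _ => eapply Permutation_trans; [apply Permutation_app_head; front h | apply perm_mid ]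
 end.

Ltac psolve := repeat rewrite <- app_assoc; match goal with
 | |- Permutation ?L ?L => apply Permutation_refl
 | |- Permutation ?L (?h ++ ?R) => eapply Permutation_trans; [front h | apply Permutation_app_head; psolve]
 end.

Ltac msolve := repeat rewrite app_nil_r; simpl; first [reflexivity | apply meq_perm; psolve].

Goal forall a b c d e : list ty, meq ((a ++ b) ++ (c ++ d) ++ e) (e ++ (d ++ b) ++ c ++ a).
intros. msolve. Qed.

Definition env_empty : env := fun _ => [].
Definition liftenv (d c : nat) (G : env) : env :=
  fun y => if y <? c then G y else if y <? c + d then [] else G (y - d).
Definition rem (k : nat) (G : env) : env := fun y => if y <? k then G y else G (S y).

#[global] Instance env_eq_Equiv : Equivalence env_eq.
Proof. split; unfold env_eq; intros ? ; [reflexivity| intros ? H y; symmetry; auto | intros ? ? H1 H2 y; etransitivity; eauto]. Qed.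
#[global] Instance env_union_Proper : Proper (env_eq ==> env_eq ==> env_eq) env_union.
Proof. intros A A' H B B' H' y. unfold env_union. rewrite (H y), (H' y). reflexivity. Qed.
#[global] Instance env_ext_Proper M : Proper (env_eq ==> env_eq) (env_ext M).
Proof. intros A A' H [|y]; simpl; [reflexivity| apply H]. Qed.
#[global] Instance liftenv_Proper d c : Proper (env_eq ==> env_eq) (liftenv d c).
Proof. intros A A' H y. unfold liftenv. destruct (y <? c); [apply H|]. destruct (y <? c + d); [reflexivity|apply H]. Qed.
#[global] Instance rem_Proper k : Proper (env_eq ==> env_eq) (rem k).
Proof. intros A A' H y. unfold rem. destruct (y <? k); apply H. Qed.

Ltac cmp := repeat match goal with
 | |- context [?a <? ?b] => destruct (Nat.ltb_spec a b)
 | |- context [?a =? ?b] => destruct (Nat.eqb_spec a b)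
 end; try lia; try reflexivity.

Ltac eunf := unfold env_union, env_ext, env_single, liftenv, rem, env_empty; cbv beta.

Lemma union_comm : forall A B, env_eq (env_union A B) (env_union B A).
Proof. intros A B y; eunf; msolve. Qed.
Lemma union_assoc : forall A B C, env_eq (env_union A (env_union B C)) (env_union (env_union A B) C).
Proof. intros A B C y; eunf; msolve. Qed.
Lemma union_empty_l : forall A, env_eq (env_union env_empty A) A.
Proof. intros A y; eunf; msolve. Qed.
Lemma union_empty_r : forall A, env_eq (env_union A env_empty) A.
Proof. intros A y; eunf; msolve. Qed.

Lemma liftenv_union : forall d c A B, env_eq (liftenv d c (env_union A B)) (env_union (liftenv d c A) (liftenv d c B)).
Proof. intros d c A B y; eunf; cmp. Qed.

Lemma liftenv_ext : forall d c M G, env_eq (liftenv d (S c) (env_ext M G)) (env_ext M (liftenv d c G)).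
Proof. intros d c M G [|y]; eunf; cmp. replace (S y - d) with (S (y - d)) by lia. reflexivity. Qed.

Scheme typed_mut := Induction for typed Sort Prop
with mtyped_mut := Induction for mtyped Sort Prop.
Combined Scheme typed_comb from typed_mut, mtyped_mut.

Lemma meq_nonnil : forall A B, meq A B -> A <> [] -> B <> [].
Proof. intros A B H HA HB. subst. apply meq_length in H. destruct A; [congruence|discriminate]. Qed.

Lemma relevance :
  (forall G t s n, typed G t s n -> forall k, occurs k t = true -> G k <> []) /\
  (forall G t M n, mtyped G t M n -> forall k, occurs k t = true -> G k <> []).
Proof.
  apply typed_comb; intros; simpl in *.
  - apply Nat.eqb_eq in H. subst. unfold env_single. rewrite Nat.eqb_refl. discriminate.
  - apply (H (S k) H0).
  - unfold env_union. apply Bool.orb_true_iff in H2. destruct H2 as [H2|H2]; [apply Bool.orb_true_iff in H2; destruct H2 as [H2|H2]|].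
    + specialize (H k H2). destruct (G k); [congruence|discriminate].
    + specialize (H0 k H2). destruct (G k); [simpl; destruct (D k); [congruence|discriminate]|discriminate].
    + specialize (H1 (S k) H2). simpl in H1. destruct (G k); [simpl; destruct (D k); [simpl; exact H1|discriminate]|discriminate].
  - eapply meq_nonnil; [apply e|]. eauto.
  - eauto.
  - unfold env_union. specialize (H k H1). destruct (G k); [congruence|discriminate].
Qed.

Lemma lift_typed :
  (forall G t s n, typed G t s n -> forall d c, typed (liftenv d c G) (lift d c t) s n) /\
  (forall G t M n, mtyped G t M n -> forall d c, exists G', env_eq G' (liftenv d c G) /\ mtyped G' (lift d c t) M n).
Proof.
  apply typed_comb; intros; simpl.
  - destruct (Nat.ltb_spec x c).
    + eapply t_eq; [apply t_var| |reflexivity]. intro y; eunf; cmp.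
    + eapply t_eq; [apply t_var| |reflexivity]. intro y; eunf; cmp.
  - apply t_abs. eapply t_eq; [apply H| apply liftenv_ext | reflexivity].
  - destruct (H d c) as [G1 [HG1 HT1]]. destruct (H0 d c) as [D1 [HD1 HT2]].
    eapply t_eq; [eapply t_app; [exact i|exact i0|exact HT1|exact HT2|]| |reflexivity].
    + eapply t_eq; [apply (H1 d (S c))| apply liftenv_ext | reflexivity].
    + rewrite HG1, HD1, !liftenv_union. reflexivity.
  - eapply t_eq; [apply H| rewrite e; reflexivity | exact t1].
  - exists (liftenv d c G). split; [reflexivity|]. constructor. auto.
  - destruct (H0 d c) as [D1 [HD1 HT]]. exists (env_union (liftenv d c G) D1). split.
    + rewrite HD1, liftenv_union. reflexivity.
    + constructor; auto.
Qed.


Inductive Mty : env -> tm -> mset -> nat -> Prop :=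
| Mty_nil D w : env_eq D env_empty -> Mty D w [] 0
| Mty_cons D D1 D2 w s M n m k : typed D1 w s n -> Mty D2 w M m ->
    env_eq D (env_union D1 D2) -> k = n + m -> Mty D w (s :: M) k.

Lemma Mty_env : forall D w M m, Mty D w M m -> forall D', env_eq D D' -> Mty D' w M m.
Proof. intros D w M m H D' E. destruct H.
  - constructor. rewrite <- E. auto.
  - econstructor; eauto. rewrite <- E. auto. Qed.

Lemma Mty_cons_inv : forall D w s M k, Mty D w (s :: M) k ->
  exists D1 D2 n m, typed D1 w s n /\ Mty D2 w M m /\ env_eq D (env_union D1 D2) /\ k = n + m.
Proof. intros. inversion H; subst. do 4 eexists; eauto. Qed.
Lemma Mty_nil_inv : forall D w k, Mty D w [] k -> env_eq D env_empty /\ k = 0.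
Proof. intros. inversion H; subst. auto. Qed.

Lemma Mty_split : forall A B D w m, Mty D w (A ++ B) m ->
  exists D1 D2 m1 m2, Mty D1 w A m1 /\ Mty D2 w B m2 /\ env_eq D (env_union D1 D2) /\ m = m1 + m2.
Proof.
  induction A; intros B D w m H; simpl in H.
  - exists env_empty, D, 0, m. split; [constructor; reflexivity|]. split; [auto|].
    split; [symmetry; apply union_empty_l | lia].
  - apply Mty_cons_inv in H. destruct H as [D1 [D2 [n [m0 [Ht [HM [E0 ->]]]]]]].
    destruct (IHA B D2 w m0 HM) as [F1 [F2 [m1 [m2 [H1 [H2 [E Hm]]]]]]].
    exists (env_union D1 F1), F2, (n + m1), m2. split; [econstructor; eauto; reflexivity|].
    split; [auto|]. split; [|lia]. rewrite E0, E. apply union_assoc.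
Qed.

Lemma Mty_join : forall D1 w A m1, Mty D1 w A m1 -> forall D2 B m2, Mty D2 w B m2 ->
  Mty (env_union D1 D2) w (A ++ B) (m1 + m2).
Proof.
  induction 1; intros D' B m2 HB; simpl.
  - eapply Mty_env; [exact HB|]. rewrite H. symmetry. apply union_empty_l.
  - econstructor; [exact H| apply (IHMty _ _ _ HB) | | lia].
    rewrite H1. symmetry. apply union_assoc.
Qed.

Lemma Mty_perm : forall w M M', Permutation M M' -> forall D m, Mty D w M m -> Mty D w M' m.
Proof.
  intros w M M' HP. induction HP; intros D m H.
  - exact H.
  - apply Mty_cons_inv in H. destruct H as [D1 [D2 [n [m0 [Ht [HM [E0 ->]]]]]]]. econstructor; eauto.
  - apply Mty_cons_inv in H. destruct H as [D1 [D2 [n [m0 [Ht [HM [E0 ->]]]]]]].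
    apply Mty_cons_inv in HM. destruct HM as [D3 [D4 [n' [m1 [Ht' [HM' [E1 ->]]]]]]].
    econstructor; [exact Ht'| econstructor; [exact Ht | exact HM' | reflexivity | reflexivity] | | lia].
    rewrite E0, E1. rewrite !union_assoc. rewrite (union_comm D1 D3). reflexivity.
  - auto.
Qed.

Lemma Mty_teq : forall w M M', Forall2 teq M M' -> forall D m, Mty D w M m -> Mty D w M' m.
Proof.
  intros w M M' HF. induction HF; intros D m HH; [exact HH|].
  apply Mty_cons_inv in HH. destruct HH as [D1 [D2 [n [m0 [Ht [HM [E0 ->]]]]]]].
  econstructor; [eapply t_eq; [exact Ht| reflexivity| exact H] | eauto | eauto | reflexivity].
Qed.

Lemma Mty_meq : forall w M M' D m, meq M M' -> Mty D w M m -> Mty D w M' m.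
Proof. intros w M M' D m HM H. apply meq_to_P in HM. destruct HM as [P [HP HF]].
  eapply Mty_teq; [exact HF|]. eapply Mty_perm; eauto. Qed.

Lemma mtyped_Mty : forall G t M n, mtyped G t M n -> Mty G t M n.
Proof.
  induction 1.
  - econstructor; [exact H| constructor; reflexivity| |lia]. symmetry; apply union_empty_r.
  - econstructor; eauto. reflexivity.
Qed.

Lemma Mty_mtyped : forall D t M n, Mty D t M n -> M <> [] -> exists D', env_eq D' D /\ mtyped D' t M n.
Proof.
  induction 1; intros HM; [congruence|]. subst k.
  destruct M as [|s' M'].
  - apply Mty_nil_inv in H0. destruct H0 as [H2 ->]. exists D1. split; [rewrite H1, H2, union_empty_r; reflexivity|].
    rewrite Nat.add_0_r. constructor; auto.
  - destruct IHMty as [D' [E HD']]; [discriminate|]. exists (env_union D1 D'). split.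
    + rewrite H1, E. reflexivity.
    + constructor; auto.
Qed.

Lemma Mty_lift : forall D w M m, Mty D w M m -> forall d c, Mty (liftenv d c D) (lift d c w) M m.
Proof.
  induction 1; intros d c.
  - constructor. rewrite H. intro y; eunf; cmp.
  - econstructor; [apply (proj1 lift_typed); exact H | apply IHMty | | exact H2].
    rewrite H1. apply liftenv_union.
Qed.

Lemma lift_lift : forall t d d' c, lift d c (lift d' c t) = lift (d + d') c t.
Proof.
  induction t; intros d d' c; simpl.
  - destruct (Nat.ltb_spec n c); simpl.
    + destruct (Nat.ltb_spec n c); [reflexivity|lia].
    + destruct (Nat.ltb_spec (n + d') c); [lia|]. f_equal. lia.
  - rewrite IHt. reflexivity.
  - rewrite IHt1, IHt2, IHt3. reflexivity.
Qed.

Lemma lift_0 : forall t c, lift 0 c t = t.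
Proof.
  induction t; intros c; simpl.
  - destruct (n <? c); [reflexivity| rewrite Nat.add_0_r; reflexivity].
  - rewrite IHt; reflexivity.
  - rewrite IHt1, IHt2, IHt3; reflexivity.
Qed.


Lemma rem_union : forall k A B, env_eq (rem k (env_union A B)) (env_union (rem k A) (rem k B)).
Proof. intros k A B y; eunf; cmp. Qed.

Lemma env_sub_ext : forall k M G Dw,
  env_eq (env_union (rem (S k) (env_ext M G)) (liftenv 1 0 Dw)) (env_ext M (env_union (rem k G) Dw)).
Proof. intros k M G Dw [|y]; eunf; simpl; cmp; rewrite ?Nat.sub_0_r, ?app_nil_r; reflexivity. Qed.

Lemma Mty_lift1 : forall Dw k u M m, Mty Dw (lift k 0 u) M m -> Mty (liftenv 1 0 Dw) (lift (S k) 0 u) M m.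
Proof. intros. pose proof (Mty_lift _ _ _ _ H 1 0) as H'. rewrite lift_lift in H'. exact H'. Qed.

Lemma subst_typed :
 (forall G t s n, typed G t s n -> forall k u Dw m, Mty Dw (lift k 0 u) (G k) m ->
    exists n', n' + length (G k) = n + m /\ typed (env_union (rem k G) Dw) (subst k u t) s n') /\
 (forall G t M n, mtyped G t M n -> forall k u Dw m, Mty Dw (lift k 0 u) (G k) m ->
    exists G' n', env_eq G' (env_union (rem k G) Dw) /\ n' + length (G k) = n + m /\ mtyped G' (subst k u t) M n').
Proof.
  apply typed_comb.
  -
    intros x s k u Dw m H. unfold env_single in H |- *. simpl subst.
    destruct (Nat.eqb_spec k x).
    + subst k. rewrite Nat.eqb_refl in *. rewrite Nat.ltb_irrefl.
      apply Mty_cons_inv in H. destruct H as [D1 [D2 [n0 [m0 [Ht [HM [E ->]]]]]]].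
      apply Mty_nil_inv in HM. destruct HM as [E2 ->].
      exists n0. split; [simpl; lia|].
      eapply t_eq; [exact Ht| |reflexivity].
      rewrite E, E2, union_empty_r. intro y; eunf; cmp.
    + apply Mty_nil_inv in H. destruct H as [E ->].
      exists 1. split; [simpl; lia|].
      destruct (Nat.ltb_spec x k).
      * eapply t_eq; [apply t_var| |reflexivity]. rewrite E, union_empty_r. intro y; eunf; cmp.
      * destruct (Nat.eqb_spec x k); [congruence|].
        eapply t_eq; [apply t_var| |reflexivity]. rewrite E, union_empty_r. intro y; eunf; cmp.
  -
    intros G M t s n Ht IH k u Dw m H.
    destruct (IH (S k) u (liftenv 1 0 Dw) m (Mty_lift1 _ _ _ _ _ H)) as [n' [Hn Ht']].
    exists (S n'). simpl in Hn. split; [lia|]. simpl. apply t_abs.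
    eapply t_eq; [exact Ht'| apply env_sub_ext | reflexivity].
  -
    intros G D L t u r s ps Mt Mu n1 n2 n3 Hc1 Hc2 Ht IHt Hu IHu Hr IHr k w Dw m H.
    unfold env_union in H; cbv beta in H.
    apply Mty_split in H. destruct H as [D1 [Dx [m1 [mx [H1 [Hx [E1 ->]]]]]]].
    apply Mty_split in Hx. destruct Hx as [D2 [D3 [m2 [m3 [H2 [H3 [E2 ->]]]]]]].
    destruct (IHt k w D1 m1 H1) as [G1' [n1' [EG1 [Hn1 Ht']]]].
    destruct (IHu k w D2 m2 H2) as [G2' [n2' [EG2 [Hn2 Hu']]]].
    destruct (IHr (S k) w (liftenv 1 0 D3) m3 (Mty_lift1 _ _ _ _ _ H3)) as [n3' [Hn3 Hr']].
    exists (S (n1' + n2' + n3')). split.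
    + simpl in Hn3. unfold env_union. rewrite !length_app. lia.
    + simpl. eapply t_eq; [eapply t_app; [exact Hc1 | exact Hc2 | exact Ht' | exact Hu' | ]| |reflexivity].
      * eapply t_eq; [exact Hr' | apply env_sub_ext | reflexivity].
      * rewrite EG1, EG2, E1, E2, !rem_union. intro y; eunf; msolve.
  -
    intros G G' t s s' n Ht IH E Hs k u Dw m H.
    assert (H' : Mty Dw (lift k 0 u) (G k) m) by (eapply Mty_meq; [symmetry; apply E| exact H]).
    destruct (IH k u Dw m H') as [n' [Hn Ht']].
    exists n'. split; [rewrite <- (meq_length _ _ (E k)); exact Hn|].
    eapply t_eq; [exact Ht'| rewrite E; reflexivity | exact Hs].
  -
    intros G t s n Ht IH k u Dw m H.
    destruct (IH k u Dw m H) as [n' [Hn Ht']].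
    exists (env_union (rem k G) Dw), n'. split; [reflexivity|]. split; [exact Hn|]. constructor; auto.
  -
    intros G D t s M n m0 Ht IHt HM IHM k u Dw m H.
    unfold env_union in H; cbv beta in H.
    apply Mty_split in H. destruct H as [D1 [D2 [m1 [m2 [H1 [H2 [E ->]]]]]]].
    destruct (IHt k u D1 m1 H1) as [n' [Hn Ht']].
    destruct (IHM k u D2 m2 H2) as [G' [n'' [EG [Hn' HM']]]].
    exists (env_union (env_union (rem k G) D1) G'), (n' + n''). split.
    + rewrite EG, E, rem_union. intro y; eunf; msolve.
    + split; [unfold env_union; rewrite length_app; lia|]. constructor; auto.
Qed.


Lemma inv_lam : forall G t T n, typed G (Lam t) T n ->
  exists G0 M s0 n0, typed (env_ext M G0) t s0 n0 /\ env_eq G0 G /\ teq (TArr M s0) T /\ n = S n0.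
Proof.
  intros G t T n H. remember (Lam t) as t'. induction H; try discriminate.
  - injection Heqt' as ->. exists G, M, s, n. split; [auto|]. split; [reflexivity|]. split; reflexivity.
  - destruct (IHtyped Heqt') as [G0 [M [s0 [n0 [K1 [K2 [K3 K4]]]]]]].
    exists G0, M, s0, n0. split; [auto|]. split; [rewrite K2; auto|]. split; [etransitivity; eauto|auto].
Qed.

Lemma inv_app : forall G a b c T n, typed G (App a b c) T n ->
  exists G1 G2 L (ps : list (mset * ty)) Mt Mu n1 n2 n3 s',
    is_ch (map (fun p => TArr (fst p) (snd p)) ps) Mt /\ is_ch (concat (map fst ps)) Mu /\
    mtyped G1 a Mt n1 /\ mtyped G2 b Mu n2 /\ typed (env_ext (map snd ps) L) c s' n3 /\
    env_eq (env_union G1 (env_union G2 L)) G /\ teq s' T /\ n = S (n1 + n2 + n3).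
Proof.
  intros G a b c T n H. remember (App a b c) as t'. induction H; try discriminate.
  - injection Heqt' as -> -> ->. exists G, D, L, ps, Mt, Mu, n1, n2, n3, s.
    repeat split; auto; reflexivity.
  - destruct (IHtyped Heqt') as [G1 [G2 [L [ps [Mt [Mu [n1 [n2 [n3 [s0 [K1 [K2 [K3 [K4 [K5 [K6 [K7 K8]]]]]]]]]]]]]]]]].
    exists G1, G2, L, ps, Mt, Mu, n1, n2, n3, s0. repeat split; auto.
    + rewrite K6; auto.
    + etransitivity; eauto.
Qed.

Lemma env_ext_lift_union : forall M L Du,
  env_eq (env_union (env_ext M L) (liftenv 1 0 Du)) (env_ext M (env_union L Du)).
Proof. intros M L Du [|y]; eunf; simpl; cmp; rewrite ?Nat.sub_0_r, ?app_nil_r; reflexivity. Qed.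

Lemma plug_lemma : forall t0 D u G T n, typed G (plug D (Lam t0)) T n ->
  forall M tau, teq T (TArr M tau) -> forall Du m, Mty Du u M m ->
  exists n', typed (env_union G Du) (plug D (subst 0 (lift (depth D) 0 u) t0)) tau n' /\ n' + length M + 1 = n + m.
Proof.
  intros t0 D. induction D as [|a b D IH]; intros u G T n H M tau HT Du m Hu; simpl in *.
  - apply inv_lam in H. destruct H as [G0 [M' [s0 [n0 [Ht [EG [HT' ->]]]]]]].
    assert (HA : teq (TArr M' s0) (TArr M tau)) by (etransitivity; eauto).
    inversion HA; subst.
    rewrite lift_0.
    assert (Hu' : Mty Du (lift 0 0 u) (env_ext M' G0 0) m).
    { rewrite lift_0. simpl. eapply Mty_meq; [symmetry; eauto| exact Hu]. }
    destruct ((proj1 subst_typed) _ _ _ _ Ht 0 u Du m Hu') as [n' [Hn Ht']].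
    exists n'. simpl in Hn. rewrite <- (meq_length _ _ H2). split; [|lia].
    eapply t_eq; [exact Ht'| |exact H4]. rewrite <- EG. intro y; eunf; cmp.
  - apply inv_app in H.
    destruct H as [G1 [G2 [L [ps [Mt [Mu [n1 [n2 [n3 [s0 [H1 [H2 [H3 [H4 [H5 [H6 [H7 H8]]]]]]]]]]]]]]]]].
    destruct (IH (lift 1 0 u) _ _ _ H5 M tau (ltac:(etransitivity; eauto)) (liftenv 1 0 Du) m
                 (Mty_lift _ _ _ _ Hu 1 0)) as [n' [Ht' Hn]].
    rewrite lift_lift, Nat.add_1_r in Ht'.
    exists (S (n1 + n2 + n')). split; [|lia].
    eapply t_eq; [eapply t_app; [exact H1|exact H2|exact H3|exact H4|] | | reflexivity].
    + eapply t_eq; [exact Ht'| apply env_ext_lift_union | reflexivity].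
    + rewrite <- H6. intro y; eunf; msolve.
Qed.

Lemma nonempty_lemma : forall t0 D G T n, typed G (plug D (Lam t0)) T n ->
  forall M tau, teq T (TArr M tau) -> occurs 0 t0 = true -> M <> [].
Proof.
  intros t0 D. induction D as [|a b D IH]; intros G T n H M tau HT Hocc; simpl in *.
  - apply inv_lam in H. destruct H as [G0 [M' [s0 [n0 [Ht [EG [HT' ->]]]]]]].
    assert (HA : teq (TArr M' s0) (TArr M tau)) by (etransitivity; eauto).
    inversion HA; subst.
    pose proof ((proj1 relevance) _ _ _ _ Ht 0 Hocc) as HM. simpl in HM.
    eapply meq_nonnil; eauto.
  - apply inv_app in H.
    destruct H as [G1 [G2 [L [ps [Mt [Mu [n1 [n2 [n3 [s0 [H1 [H2 [H3 [H4 [H5 [H6 [H7 H8]]]]]]]]]]]]]]]]].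
    eapply IH; eauto. etransitivity; eauto.
Qed.

Lemma Q_lemma : forall t0 D u (ps : list (mset * ty)) G1 n1,
  Mty G1 (plug D (Lam t0)) (map (fun p => TArr (fst p) (snd p)) ps) n1 ->
  forall Du m, Mty Du u (concat (map fst ps)) m ->
  exists n', Mty (env_union G1 Du) (plug D (subst 0 (lift (depth D) 0 u) t0)) (map snd ps) n' /\
    n' + length (concat (map fst ps)) + length ps = n1 + m.
Proof.
  intros t0 D u. induction ps as [|p ps IH]; intros G1 n1 H Du m Hu; simpl in *.
  - apply Mty_nil_inv in H. apply Mty_nil_inv in Hu. destruct H as [E1 ->]. destruct Hu as [E2 ->].
    exists 0. split; [|lia]. constructor. rewrite E1, E2. apply union_empty_l.
  - apply Mty_cons_inv in H. destruct H as [E1 [E2 [a [b [Ht [HM [E ->]]]]]]].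
    apply Mty_split in Hu. destruct Hu as [F1 [F2 [m1 [m2 [Hu1 [Hu2 [EF ->]]]]]]].
    destruct (plug_lemma t0 D u _ _ _ Ht (fst p) (snd p) (teq_refl _) F1 m1 Hu1) as [a' [Ht' Ha]].
    destruct (IH E2 b HM F2 m2 Hu2) as [b' [HM' Hb]].
    exists (a' + b'). split.
    + econstructor; [exact Ht'| exact HM'| |reflexivity]. rewrite E, EF. intro y; eunf; msolve.
    + rewrite length_app. lia.
Qed.

Lemma sr :
  (forall G t s n, typed G t s n -> forall t2, ne_step t t2 -> exists n2, n2 < n /\ typed G t2 s n2) /\
  (forall G t M n, mtyped G t M n -> forall t2, ne_step t t2 -> exists n2, n2 < n /\ mtyped G t2 M n2).
Proof.
  apply typed_comb.
  - intros x s t2 Hs. inversion Hs.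
  - intros G M t s n Ht IH t2 Hs. inversion Hs; subst.
    destruct (IH _ H0) as [n2 [Hn Ht2]]. exists (S n2). split; [lia|]. constructor; auto.
  - intros G D L t u r s ps Mt Mu n1 n2 n3 Hc1 Hc2 Ht IHt Hu IHu Hr IHr t2 Hs.
    inversion Hs; subst.
    +
      rename t0 into t0, D0 into Dc.
      pose proof ((proj1 relevance) _ _ _ _ Hr 0 H4) as Hps. simpl in Hps.
      destruct ps as [|p ps']; [simpl in Hps; congruence|].
      destruct Hc1 as [[_ ->]|[Hnil _]]; [|discriminate].
      apply mtyped_Mty in Ht.
      assert (Hp : fst p <> []).
      { simpl in Ht. apply Mty_cons_inv in Ht. destruct Ht as [E1 [E2 [a [b [Ht1 _]]]]].
        eapply (nonempty_lemma t0 Dc); [exact Ht1 | reflexivity | exact H3]. }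
      destruct Hc2 as [[_ ->]|[Hnil _]]; [|simpl in Hnil; destruct (fst p); [congruence|discriminate]].
      apply mtyped_Mty in Hu.
      destruct (Q_lemma t0 Dc u _ _ _ Ht _ _ Hu) as [n' [HM Hn']].
      set (c := plug Dc (subst 0 (lift (depth Dc) 0 u) t0)) in *.
      assert (HM' : Mty (env_union G D) (lift 0 0 c) (env_ext (map snd (p :: ps')) L 0) n')
        by (rewrite lift_0; exact HM).
      destruct ((proj1 subst_typed) _ _ _ _ Hr 0 c _ _ HM') as [n'' [Hn'' Hr']].
      exists n''. split.
      * simpl in Hn''. rewrite length_map in Hn''. simpl in Hn'. lia.
      * unfold dbeta_contractum. eapply t_eq; [exact Hr'| |reflexivity].
        intro y; eunf; cmp; msolve.
    + match goal with H : ne_step t _ |- _ => destruct (IHt _ H) as [m [Hm Ht']] end. exists (S (m + n2 + n3)). split; [lia|]. econstructor; eauto.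
    + match goal with H : ne_step u _ |- _ => destruct (IHu _ H) as [m [Hm Hu']] end. exists (S (n1 + m + n3)). split; [lia|]. econstructor; eauto.
    + match goal with H : ne_step r _ |- _ => destruct (IHr _ H) as [m [Hm Hr']] end. exists (S (n1 + n2 + m)). split; [lia|]. econstructor; eauto.
  - intros G G' t s s' n Ht IH E Hs t2 Hst.
    destruct (IH _ Hst) as [m [Hm Ht']]. exists m. split; auto. eapply t_eq; eauto.
  - intros G t s n Ht IH t2 Hs. destruct (IH _ Hs) as [m [Hm Ht']]. exists m. split; auto. constructor; auto.
  - intros G D t s M n m Ht IHt HM IHM t2 Hs.
    destruct (IHt _ Hs) as [a [Ha Ht']]. destruct (IHM _ Hs) as [b [Hb HM']].
    exists (a + b). split; [lia|]. constructor; auto.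
Qed.

Theorem mainTheorem8 :
  forall (G : env) (t1 t2 : tm) (s : ty) (n1 : nat),
    typed G t1 s n1 ->
    ne_step t1 t2 ->
    exists n2, n2 < n1 /\ typed G t2 s n2.
Proof. intros. eapply (proj1 sr); eauto. Qed.
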